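(* For all $X_n,Y_n\in\mathcal{T}^N$, $$D_{T,L^2}(\hat\mu_n(X_n),\hat\mu_n(Y_n))^2\le\frac{b^2}{N}\sum_{k\in I_n}\|X^k-Y^k\|_{L^2}^2,$$ where $\|x\|_{L^2}^2=\int_0^T x_t^2\,dt$.
   Context: $T>0$, $f:\mathbb{R}\to[0,1]$ Lipschitz with constant $1$, $\mathcal{T}=C([0,T],\mathbb{R})$. $(b_i)_{i\in\mathbb{Z}}$ is a positive summable sequence and $b=\sum_{i\in\mathbb{Z}}b_i$. For $n\ge0$, $I_n=\{-n,\dots,n\}$, $N=2n+1$. Shifts $(S^iu)^j=u^{i+j}$ on $\mathcal{T}^{\mathbb{Z}}$. For $u_n\in\mathcal{T}^N$, $u_{n,p}\in\mathcal{T}^{\mathbb{Z}}$ is the periodic extension, $u_{n,p}^j=u_n^{j\bmod I_n}$ (with $j\bmod I_n$ the element of $I_n$ congruent to $j$ mod $N$), and $\hat\mu_n(u_n)=\frac1N\sum_{i\in I_n}\delta_{S^iu_{n,p}}$. $d_{L^2}(u,v)=\sum_{i\in\mathbb{Z}}b_i\|f(u^i)-f(v^i)\|_{L^2}$ on $\mathcal{T}^{\mathbb{Z}}$ and $D_{T,L^2}(\mu,\nu)=\inf_\xi\int d_{L^2}(u,v)\,d\xi(u,v)$, infimum over couplings $\xi$ of $\mu$ and $\nu$. *)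

(* Defs.v *)
From HB Require Import structures.
From mathcomp Require Import all_boot all_order all_algebra.
From mathcomp Require Import all_classical all_reals all_analysis.
Set Implicit Arguments. Unset Strict Implicit. Unset Printing Implicit Defensive.
Import Order.TTheory GRing.Theory Num.Theory.
Import numFieldNormedType.Exports.
Local Open Scope classical_set_scope.
Local Open Scope ring_scope.

Section Defs.
Variables (R : realType) (T : R).

(* C([0,T],R), encoded as functions R -> R continuous on [0,T] and
   vanishing outside [0,T] (this is a bijective encoding). *)
Definition is_path (x : R -> R) : Prop :=
  {within `[0, T]%classic, continuous x} /\
  (forall t, ~ (0 <= t <= T) -> x t = 0).

Record Cpath := Path { pval :> R -> R; pvalP : is_path pval }.

Lemma is_path0 : is_path (fun _ => 0).
Proof.
split; last by [].
by apply: continuous_subspaceT => x; exact: cvg_cst.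
Qed.

HB.instance Definition _ := gen_eqMixin Cpath.
HB.instance Definition _ := gen_choiceMixin Cpath.
HB.instance Definition _ := isPointed.Build Cpath (Path is_path0).

(* sigma-algebra on T^Z generated by the coordinate evaluations
   u |-> u^i(t); this is the Borel sigma-algebra of the product
   topology (C([0,T]) is Polish, Z countable). *)
Definition cyl_sets : set (set (int -> Cpath)) :=
  [set A | exists (i : int) (t : R) (B : set R),
      measurable B /\ A = (fun u : int -> Cpath => pval (u i) t) @^-1` B].

Definition Config := g_sigma_algebraType cyl_sets.

Definition intT : set R := `[0, T]%classic.

Definition L2sq (x : R -> R) : \bar R :=
  (\int[lebesgue_measure]_(t in intT) ((x t) ^+ 2)%:E)%E.

Definition L2norm (x : R -> R) : R := Num.sqrt (fine (L2sq x)).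

Definition dL2 (f : R -> R) (b : int -> R) (u v : Config) : \bar R :=
  \esum_(i in [set: int]) (b i * L2norm (fun t => f (u i t) - f (v i t)))%:E.

Definition is_coupling (mu nu : set Config -> \bar R)
    (xi : probability (Config * Config)%type R) : Prop :=
  forall A : set Config, measurable A ->
    xi (A `*` setT) = mu A /\ xi (setT `*` A) = nu A.

Definition DTL2 (f : R -> R) (b : int -> R) (mu nu : set Config -> \bar R)
  : \bar R :=
  ereal_inf [set r | exists xi : probability (Config * Config)%type R,
      is_coupling mu nu xi /\ r = (\int[xi]_z dL2 f b z.1 z.2)%E].

(* I_n = {-n..n} is indexed by 'I_N, N = 2n+1, via k <-> k - n. *)
Definition per_ext (n : nat) (u : 'I_(n.*2.+1) -> Cpath) : Config :=
  fun j : int => u (inord `|((j + n%:Z) %% (n.*2.+1)%:Z)%Z|%N).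

Definition shift (i : int) (u : Config) : Config := fun j => u (i + j).

Definition emp (n : nat) (u : 'I_(n.*2.+1) -> Cpath) : set Config -> \bar R :=
  fun A => (((n.*2.+1)%:R)^-1%:E *
    \sum_(k < n.*2.+1) \d_(shift (k%:Z - n%:Z) (per_ext u)) A)%E.

End Defs.

(* Main.v *)
Require Import Defs.
From HB Require Import structures.
From mathcomp Require Import all_boot all_order all_algebra.
From mathcomp Require Import all_classical all_reals all_analysis.
From mathcomp Require Import measurable_realfun.
From mathcomp Require Import ring lra zify.
Set Implicit Arguments. Unset Strict Implicit. Unset Printing Implicit Defensive.
Import Order.TTheory GRing.Theory Num.Theory.
Local Open Scope classical_set_scope.
Local Open Scope ring_scope.
Import numFieldNormedType.Exports.

Lemma CS_sum (R : realFieldType) (N : nat) (a : 'I_N -> R) :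
  (\sum_i a i) ^+ 2 <= N%:R * \sum_i a i ^+ 2.
Proof.
have H : 0 <= \sum_i \sum_j (a i - a j) ^+ 2.
  by apply: sumr_ge0 => i _; apply: sumr_ge0 => j _; exact: sqr_ge0.
have E : \sum_i \sum_j (a i - a j) ^+ 2 =
    (N%:R * \sum_i a i ^+ 2) *+ 2 - ((\sum_i a i) ^+ 2) *+ 2.
  transitivity (\sum_i (N%:R * a i ^+ 2 + \sum_j a j ^+ 2 - (a i * \sum_j a j) *+ 2)).
    apply: eq_bigr => i _.
    have -> : N%:R * a i ^+ 2 = \sum_(j < N) a i ^+ 2.
      by rewrite sumr_const card_ord mulr_natl.
    rewrite mulr_sumr -sumrMnl -big_split -sumrB /=; apply: eq_bigr => j _.
    by rewrite sqrrB; ring.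
  rewrite sumrB big_split /= sumr_const card_ord -mulr_sumr -sumrMnl.
  have -> : \sum_(i < N) (a i * \sum_(j < N) a j) *+ 2 = ((\sum_(i < N) a i) ^+ 2) *+ 2.
    by rewrite sumrMnl expr2 mulr_suml.
  rewrite [X in _ = X - _]mulr2n; congr (_ + _ - _).
  by rewrite sumrMnl mulr_natl.
rewrite E subr_ge0 in H.
by rewrite -(ler_pMn2r (n:=2)) .
Qed.

Lemma esum_scale_le (R : realType) (I : choiceType) (c : R) (g : I -> \bar R) :
  0 <= c -> (forall i, 0 <= g i)%E ->
  (\esum_(i in [set: I]) (c%:E * g i) <= c%:E * \esum_(i in [set: I]) g i)%E.
Proof.
move=> c0 g0; apply: ge_ereal_sup => _ [A [finA _] <-] /=.
rewrite -ge0_mule_fsumr//; apply: lee_wpmul2l; first by rewrite lee_fin.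
by apply: esum_ge; exists A.
Qed.

Lemma reindex_mod (R : realType) (n : nat) (i : int) (a : 'I_(n.*2.+1) -> R) :
  \sum_(k < n.*2.+1) a (inord `|((((k%:Z - n%:Z) + i) + n%:Z) %% (n.*2.+1)%:Z)%Z|%N)
  = \sum_(k < n.*2.+1) a k.
Proof.
set N := n.*2.+1.
pose h (k : 'I_N) : 'I_N := inord `|((((k%:Z - n%:Z) + i) + n%:Z) %% N%:Z)%Z|%N.
have hv (k : 'I_N) : (h k)%:Z = ((k%:Z + i) %% N%:Z)%Z.
  have e : ((k%:Z - n%:Z) + i) + n%:Z = k%:Z + i by ring.
  rewrite /h e inordK.
    by rewrite gez0_abs // modz_ge0.
  rewrite -ltz_nat gez0_abs ?modz_ge0 //; exact: ltz_pmod.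
have hinj : injective h.
  move=> k1 k2 e; have := hv k1; rewrite e hv => /eqP.
  rewrite eqz_modDr !modz_small ?ltz_nat ?ltn_ord //= => /eqP.
  by move=> [] /val_inj.
by rewrite [RHS](reindex_inj hinj).
Qed.
Lemma ge0_le_integral_gen d (T : measurableType d) (R : realType)
  (mu : {measure set T -> \bar R}) (D : set T) (f g : T -> \bar R) :
  (forall x, D x -> 0 <= f x)%E -> (forall x, D x -> f x <= g x)%E ->
  (\int[mu]_(x in D) f x <= \int[mu]_(x in D) g x)%E.
Proof.
move=> f0 fg.
have g0 : forall x, D x -> (0 <= g x)%E by move=> x Dx; exact: le_trans (f0 x Dx) (fg x Dx).
rewrite !ge0_integralE//; apply: ereal_sup_le => _ [h hf <-]; exists h => //= x.
apply: le_trans (hf x) _; rewrite /patch; case: ifPn => // /[!inE] Dx.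
exact: fg.
Qed.

Section L2.
Variables (R : realType) (T : R).

Lemma L2sq_ge0 (x : R -> R) : (0 <= L2sq T x)%E.
Proof. by apply: integral_ge0 => t _; rewrite lee_fin sqr_ge0. Qed.

Lemma L2sq_fin (x y : Cpath T) : L2sq T (fun t => x t - y t) \is a fin_num.
Proof.
rewrite /L2sq.
have cx := (pvalP x).1; have cy := (pvalP y).1.
have c : {within `[0, T], continuous (fun t : R => ((x t - y t) ^+ 2 : R))}.
  apply: (@within_continuous_comp _ _ _ _ (fun t => x t - y t) (fun u => u ^+ 2)).
    by move=> u _; exact: exprn_continuous.
  exact: within_continuousB.
have := continuous_compact_integrable (@segment_compact _ 0 T) c.
by move=> /integrable_fin_num; apply; exact: measurable_itv.
Qed.

Lemma L2norm_sq (x y : Cpath T) :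
  L2sq T (fun t => x t - y t) = ((L2norm T (fun t => x t - y t)) ^+ 2)%:E.
Proof.
rewrite /L2norm sqr_sqrtr ?fineK ?L2sq_fin//.
by apply: fine_ge0; exact: L2sq_ge0.
Qed.

Lemma L2norm_lip (f : R -> R) (x y : Cpath T) :
  (forall u v, `|f u - f v| <= `|u - v|) ->
  L2norm T (fun t => f (x t) - f (y t)) <= L2norm T (fun t => x t - y t).
Proof.
move=> Lf; rewrite /L2norm; apply: ler_wsqrtr.
have le : (L2sq T (fun t => (f (x t) - f (y t))%R) <= L2sq T (fun t => (x t - y t)%R))%E.
  apply: ge0_le_integral_gen => [t _|t _]; first by rewrite lee_fin sqr_ge0.
  rewrite lee_fin.
  rewrite -real_normK ?num_real// -[X in _ <= X]real_normK ?num_real//.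
  by rewrite lerXn2r ?nnegrE// Lf.
apply: fine_le => //; last exact: L2sq_fin.
rewrite ge0_fin_numE ?L2sq_ge0//; apply: le_lt_trans le _.
by rewrite -ge0_fin_numE ?L2sq_ge0 ?L2sq_fin.
Qed.
End L2.
Import HBNNSimple.
Section cpl.
Local Open Scope ereal_scope.
Context d (T : measurableType d) (R : realType) (N : nat) (z : nat -> T).

Definition cpl_r : {nonneg R} := @NngNum R (N.+1%:R^-1) ltac:(by rewrite invr_ge0).
Definition cpl := mscale cpl_r (msum (fun k => @dirac _ T (z k) R) N.+1).
HB.instance Definition _ := Measure.on cpl.

Lemma cpl_setT : cpl setT = 1%E.
Proof.
rewrite /cpl /mscale /= /msum.
rewrite (eq_bigr (fun=> 1%E)); last by move=> k _; rewrite /= diracE in_setT.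
rewrite sumEFin big_const card_ord iter_addr addr0 -EFinM.
by rewrite mulVf.
Qed.

HB.instance Definition _ := Measure_isProbability.Build _ _ _ cpl cpl_setT.

Lemma cpl_int_le (F : T -> \bar R) : (forall x, 0 <= F x)%E ->
  (\int[cpl]_x F x <= (N.+1%:R^-1)%:E * \sum_(k < N.+1) F (z k))%E.
Proof.
move=> F0; rewrite ge0_integralTE//; apply: ge_ereal_sup => _ [h hF <-].
rewrite -integralT_nnsfun.
have mh : measurable_fun [set: T] (fun x => (h x)%:E).
  by apply/measurable_EFinP; exact: measurable_funP.
rewrite /cpl ge0_integral_mscale//; last by move=> x _; rewrite lee_fin.
rewrite ge0_integral_measure_sum//; last by move=> x _; rewrite lee_fin.
rewrite lee_pmul2l//; last by rewrite lte_fin invr_gt0.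
apply: lee_sum => k _; rewrite integral_dirac// diracT mul1e; exact: hF.
Qed.
End cpl.

Theorem lemma3p17 (R : realType) (T : R) (f : R -> R) (b : int -> R)
  (n : nat) (X Y : 'I_(n.*2.+1) -> Cpath T) :
  0 < T ->
  (forall x, 0 <= f x <= 1) ->
  (forall x y, `|f x - f y| <= `|x - y|) ->
  (forall i, 0 < b i) ->
  (\esum_(i in [set: int]) (b i)%:E < +oo)%E ->
  let bsum := (\esum_(i in [set: int]) (b i)%:E)%E in
  let D := DTL2 f b (emp X) (emp Y) in
  (D * D <= bsum * bsum * ((n.*2.+1)%:R)^-1%:E *
     \sum_(k < n.*2.+1) L2sq T (fun t => (X k t - Y k t)%R))%E.
Proof.
move=> T0 f01 Lf b0 bfin; rewrite /=.
set bsum := (\esum_(i in [set: int]) (b i)%:E)%E.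
set D := DTL2 f b (emp X) (emp Y).
pose z (k : nat) : (Config T * Config T)%type :=
  (Defs.shift (k%:Z - n%:Z) (per_ext X), Defs.shift (k%:Z - n%:Z) (per_ext Y)).
pose xi : probability (Config T * Config T)%type R := @cpl _ _ R (n.*2) z.
have coup : is_coupling (emp X) (emp Y) xi.
  move=> A _; split; rewrite /xi /cpl /mscale /msum /emp /=; congr (_ * _)%E;
    apply: eq_bigr => k _; rewrite !diracE; congr ((_ : bool)%:R%:E);
    apply/idP/idP; rewrite !inE /z /=; [by case| |by case|].
  - by move=> h; split.
  - by move=> h; split.
pose a (k : 'I_(n.*2.+1)) := L2norm T (fun t => X k t - Y k t).
pose S := \sum_(k < n.*2.+1) a k.
have a0 k : 0 <= a k by rewrite /a /L2norm sqrtr_ge0.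
have S0 : 0 <= S by apply: sumr_ge0 => k _.
have bsum0 : (0 <= bsum)%E by apply: esum_ge0 => i _; rewrite lee_fin ltW.
have bsumfin : bsum \is a fin_num by rewrite ge0_fin_numE.
set B := fine bsum.
have bsumE : bsum = B%:E by rewrite /B fineK.
have B0 : 0 <= B by rewrite /B fine_ge0.
set r := (n.*2.+1%:R^-1 : R).
have r0 : 0 <= r by rewrite /r invr_ge0.
have dL2_0 (u v : Config T) : (0 <= dL2 f b u v)%E.
  by apply: esum_ge0 => i _; rewrite lee_fin; apply: mulr_ge0; [exact: ltW | exact: sqrtr_ge0].
have Dub : (D <= (r * S * B)%:E)%E.
  apply: (@le_trans _ _ (\int[xi]_z dL2 f b z.1 z.2)%E).
    by apply: ereal_inf_lbound; exists xi.
  apply: le_trans (cpl_int_le _ _ _) _; first by move=> x; exact: dL2_0.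
  rewrite -mulrA EFinM; apply: lee_wpmul2l; first by rewrite lee_fin.
  apply: (@le_trans _ _ (\sum_(k < n.*2.+1) \esum_(i in [set: int])
     (b i * a (inord `|((((k%:Z - n%:Z) + i) + n%:Z) %% (n.*2.+1)%:Z)%Z|%N))%:E)%E).
    apply: lee_sum => k _; apply: le_esum => i _; rewrite lee_fin.
    apply: ler_wpM2l; first exact: ltW.
    exact: L2norm_lip.
  rewrite -esum_sum; last by move=> i k _ _; rewrite lee_fin; apply: mulr_ge0; [exact: ltW | exact: a0].
  apply: (@le_trans _ _ (\esum_(i in [set: int]) (S%:E * (b i)%:E))%E).
    apply: le_esum => i _; rewrite sumEFin -EFinM lee_fin -mulr_sumr.
    by rewrite reindex_mod mulrC.
  rewrite EFinM -bsumE; apply: esum_scale_le => // i.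
  by rewrite lee_fin ltW.
have D0 : (0 <= D)%E.
  apply/ereal_infP => _ [xi' [_ ->]]; apply: integral_ge0 => x _; exact: dL2_0.
apply: (@le_trans _ _ ((r * S * B) ^+ 2)%:E).
  by rewrite expr2 EFinM; apply: lee_pmul.
have -> : (\sum_(k < n.*2.+1) L2sq T (fun t => (X k t - Y k t)%R))%E =
          (\sum_(k < n.*2.+1) a k ^+ 2)%:E.
  by rewrite -sumEFin; apply: eq_bigr => k _; rewrite L2norm_sq.
rewrite bsumE -!EFinM lee_fin.
have CS := CS_sum a.
have H : r * S ^+ 2 <= \sum_(k < n.*2.+1) a k ^+ 2.
  apply: le_trans (ler_wpM2l r0 CS) _.
  by rewrite mulrA mulVf ?mul1r.
have -> : (r * S * B) ^+ 2 = (B * B * r) * (r * S ^+ 2) by ring.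
by apply: ler_wpM2l => //; rewrite !mulr_ge0.
Qed.
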